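(* Let \(M\) be a torsionfree bornological \(V\)-module. Then the bornological \(V\)-module \(M'\) is nuclear, that is, every subset of \(M\) that is compactoid in \(M\) is also compactoid with respect to the bornology of \(M'\).
   Context: Let \(V\) be a complete discrete valuation ring with uniformiser \(\pi\). A bornology on a set is a collection of subsets (called bounded) containing all finite subsets and closed under finite unions and under taking subsets. A bornological \(V\)-module is a \(V\)-module \(M\) with a bornology such that every bounded subset is contained in a bounded \(V\)-submodule. \(M\) is torsionfree if it is torsionfree as a \(V\)-module and \(\pi^{-1}S=\{x\in M:\pi x\in S\}\) is bounded for every bounded \(S\). A subset \(S\subseteq M\) is compactoid if there is a bounded \(V\)-submodule \(T\subseteq M\) with \(S\subseteq T\) such that for every \(n\in\mathbb N\) there is a finite set \(F_n\subseteq T\) with \(S\subseteq VF_n+\pi^nT\). The compactoid subsets form a bornology; \(M'\) denotes \(M\) with this bornology. A bornological \(V\)-module is nuclear if each of its bounded subsets is compactoid (with respect to its own bornology). *)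

(* Defs.v *)
From HB Require Import structures.
From mathcomp Require Import all_boot all_order all_algebra.
Set Implicit Arguments. Unset Strict Implicit. Unset Printing Implicit Defensive.
Import GRing.Theory.
Local Open Scope ring_scope.

Definition in_piV (V : idomainType) (pi : V) (n : nat) (a : V) : Prop :=
  exists b : V, a = pi ^+ n * b.

Definition is_DVR_unif (V : idomainType) (pi : V) : Prop :=
  [/\ pi != 0, pi \isn't a GRing.unit &
      forall a : V, a != 0 -> exists (u : V) (n : nat), u \is a GRing.unit /\ a = u * pi ^+ n].

(* pi-adic completeness (with separatedness). *)
Definition pi_complete (V : idomainType) (pi : V) : Prop :=
  (forall a : V, (forall n, in_piV pi n a) -> a = 0) /\
  (forall s : nat -> V, (forall n, in_piV pi n (s n.+1 - s n)) ->
     exists l : V, forall n, in_piV pi n (l - s n)).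

Definition complete_DVR (V : idomainType) (pi : V) : Prop :=
  is_DVR_unif pi /\ pi_complete pi.

Section Born.
Variables (V : idomainType) (M : lmodType V).

Definition subset (S T : M -> Prop) : Prop := forall x, S x -> T x.

Definition finite_set (S : M -> Prop) : Prop :=
  exists s : seq M, forall x, S x -> x \in s.

Definition is_bornology (B : (M -> Prop) -> Prop) : Prop :=
  [/\ forall S, finite_set S -> B S,
      forall S T, B S -> B T -> B (fun x => S x \/ T x) &
      forall S T, subset S T -> B T -> B S].

Definition is_submodule (T : M -> Prop) : Prop :=
  [/\ T 0, forall x y, T x -> T y -> T (x + y) &
      forall (a : V) x, T x -> T (a *: x)].

Definition bornological (B : (M -> Prop) -> Prop) : Prop :=
  is_bornology B /\
  forall S, B S -> exists T, [/\ B T, is_submodule T & subset S T].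

Definition piinv (pi : V) (S : M -> Prop) : M -> Prop := fun x => S (pi *: x).

Definition torsionfree (pi : V) (B : (M -> Prop) -> Prop) : Prop :=
  (forall (a : V) (x : M), a *: x = 0 -> a = 0 \/ x = 0) /\
  (forall S, B S -> B (piinv pi S)).

Definition span_of (F : seq M) : M -> Prop :=
  fun x => exists c : M -> V, x = \sum_(f <- F) c f *: f.

Definition span_plus (pi : V) (n : nat) (F : seq M) (T : M -> Prop) : M -> Prop :=
  fun x => exists y z, [/\ span_of F y, T z & x = y + pi ^+ n *: z].

Definition compactoid (pi : V) (B : (M -> Prop) -> Prop) (S : M -> Prop) : Prop :=
  exists T, [/\ B T, is_submodule T, subset S T &
    forall n : nat, exists F : seq M,
      (forall f, f \in F -> T f) /\ subset S (span_plus pi n F T)].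

(* M' : M with the bornology of compactoid subsets *)
Definition compactoid_born (pi : V) (B : (M -> Prop) -> Prop) : (M -> Prop) -> Prop :=
  compactoid pi B.

Definition nuclear (pi : V) (B : (M -> Prop) -> Prop) : Prop :=
  forall S, B S -> compactoid pi B S.

End Born.

(* Main.v *)
Require Import Defs.
From Stdlib Require Import IndefiniteDescription Classical.
From mathcomp Require Import all_boot all_order all_algebra.
Set Implicit Arguments. Unset Strict Implicit. Unset Printing Implicit Defensive.
Import GRing.Theory.
Local Open Scope ring_scope.

Fixpoint lspan {V : idomainType} {M : lmodType V} (F : seq M) (x : M) : Prop :=
  match F with
  | [::] => x = 0
  | f :: F0 => exists (a : V) y, lspan F0 y /\ x = a *: f + y
  end.

Lemma lspan_sub {V : idomainType} {M : lmodType V} (F : seq M) : is_submodule (lspan F).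
Proof.
elim: F => [|f F [IH0 IHD IHZ]] /=.
  split=> //; first by move=> x y -> ->; rewrite addr0.
  by move=> a x ->; rewrite scaler0.
split.
- by exists 0, 0; rewrite scale0r addr0.
- move=> x y [a [x1 [H1 ->]]] [b [y1 [H2 ->]]].
  exists (a + b), (x1 + y1); split; first exact: IHD.
  by rewrite scalerDl -!addrA; congr (_ + _); rewrite addrCA.
- move=> c x [a [x1 [H1 ->]]]; exists (c * a), (c *: x1); split; first exact: IHZ.
  by rewrite scalerDr scalerA.
Qed.

Lemma sub_opp {V : idomainType} {M : lmodType V} (U : M -> Prop) x :
  is_submodule U -> U x -> U (- x).
Proof. by move=> [_ _ HZ] Ux; rewrite -scaleN1r; apply: HZ. Qed.

Lemma sub_sub {V : idomainType} {M : lmodType V} (U : M -> Prop) x y :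
  is_submodule U -> U x -> U y -> U (x - y).
Proof. move=> HU Ux Uy; case: (HU) => _ HD _; apply: HD => //; exact: sub_opp. Qed.

Lemma lspan_mem {V : idomainType} {M : lmodType V} (F : seq M) f :
  f \in F -> lspan F f.
Proof.
elim: F => [//|g F IH]; rewrite in_cons => /orP [/eqP ->|Hf] /=.
  by exists 1, 0; split; [case: (lspan_sub F) | rewrite scale1r addr0].
by exists 0, f; split; [exact: IH | rewrite scale0r add0r].
Qed.

Lemma lspan_min {V : idomainType} {M : lmodType V} (F : seq M) (U : M -> Prop) x :
  is_submodule U -> (forall f, f \in F -> U f) -> lspan F x -> U x.
Proof.
move=> [U0 UD UZ]; elim: F x => [|f F IH] x HF /=; first by move->.
move=> [a [y [Hy ->]]]; apply: UD; first by apply: UZ; apply: HF; rewrite mem_head.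
by apply: IH => // g Hg; apply: HF; rewrite in_cons Hg orbT.
Qed.

Lemma lspan_incl {V : idomainType} {M : lmodType V} (F G : seq M) x :
  {subset F <= G} -> lspan F x -> lspan G x.
Proof. move=> HFG; apply: lspan_min; first exact: lspan_sub.
by move=> f /HFG; apply: lspan_mem. Qed.

Lemma span_of_lspan {V : idomainType} {M : lmodType V} (F : seq M) x :
  span_of F x -> lspan F x.
Proof.
move=> [c ->]; elim: F => [|f F IH]; first by rewrite big_nil.
by rewrite big_cons /=; exists (c f), (\sum_(f0 <- F) c f0 *: f0).
Qed.

Lemma span_of_sub {V : idomainType} {M : lmodType V} (F : seq M) : is_submodule (span_of F).
Proof.
split.
- by exists (fun _ => 0); rewrite big1 // => f _; rewrite scale0r.
- move=> x y [c ->] [d ->]; exists (fun f => c f + d f).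
  by rewrite -big_split /=; apply: eq_bigr => f _; rewrite scalerDl.
- move=> a x [c ->]; exists (fun f => a * c f).
  by rewrite scaler_sumr; apply: eq_bigr => f _; rewrite scalerA.
Qed.

Lemma lspan_span_undup {V : idomainType} {M : lmodType V} (F : seq M) x :
  lspan F x -> span_of (undup F) x.
Proof.
apply: lspan_min; first exact: span_of_sub.
move=> f Hf; exists (fun g => if g == f then 1 else 0).
rewrite -mem_undup in Hf.
rewrite (bigD1_seq f Hf (undup_uniq F)) /= eqxx scale1r big1 ?addr0 //.
by move=> g /negbTE ->; rewrite scale0r.
Qed.

Lemma min_exists (P : nat -> Prop) : (exists n, P n) -> exists k, P k /\ forall j, P j -> (k <= j)%N.
Proof.
move=> [n Pn]; elim: n {-2}n (leqnn n) Pn => [|m IH] n Hn Pn.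
  by exists n; split => // j _; move: Hn; rewrite leqn0 => /eqP ->.
case: (classic (exists j, (j < n)%N /\ P j)) => [[j [Hj Pj]]|H].
  by apply: (IH j) => //; rewrite -ltnS (leq_trans Hj Hn).
exists n; split => // j Pj; rewrite leqNgt; apply/negP => Hj; apply: H; by exists j.
Qed.

Lemma noeth {V : idomainType} {M : lmodType V} (pi : V) :
  (forall a : V, a != 0 -> exists (u : V) (n : nat), u \is a GRing.unit /\ a = u * pi ^+ n) ->
  forall (F : seq M) (W : M -> Prop), is_submodule W -> (forall x, W x -> lspan F x) ->
  exists G, (forall g, g \in G -> W g) /\ (forall x, W x -> lspan G x).
Proof.
move=> dvr; elim => [|f F IH] W HW WF.
  by exists [::]; split => // x /WF.
have [W0 WD WZ] := HW.
pose I a := exists w, lspan F w /\ W (a *: f + w).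
case: (classic (forall a, I a -> a = 0)) => [Hz|].
  have WF' : forall x, W x -> lspan F x.
    move=> x Wx; have [a [y [Hy Hx]]] := WF x Wx.
    have a0 : a = 0 by apply: Hz; exists y; rewrite -Hx.
    by move: Hx; rewrite a0 scale0r add0r => ->.
  exact: IH.
move=> H; have [a0 H1] := not_all_ex_not _ _ H; have [Ia0 a0n0'] := imply_to_and _ _ H1.
have a0n0 : a0 != 0 by apply/eqP.
have [w0 [Hw0 Wa0]] := Ia0.
have [u [n [Uu Ea0]]] := dvr a0 a0n0.
have Pn : I (pi ^+ n).
  exists (u^-1 *: w0); split; first by case: (lspan_sub F) => _ _; apply.
  have -> : pi ^+ n = u^-1 * a0 by rewrite Ea0 mulrA mulVr // mul1r.
  by rewrite -scalerA -scalerDr; apply: WZ.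
have [k [[wk [Hwk Wk]] kmin]] := min_exists (ex_intro (fun k => I (pi ^+ k)) n Pn).
pose W' x := W x /\ lspan F x.
have HW' : is_submodule W'.
  have [L0 LD LZ] := lspan_sub F.
  split; first by split.
  - by move=> x y [? ?] [? ?]; split; [apply: WD | apply: LD].
  - by move=> b x [? ?]; split; [apply: WZ | apply: LZ].
have [G0 [G0W G0sp]] := IH W' HW' (fun x (Hx : W' x) => proj2 Hx).
exists ((pi ^+ k *: f + wk) :: G0); split.
  by move=> g; rewrite in_cons => /orP [/eqP ->|/G0W []].
move=> x Wx; have [a [y [Hy Hx]]] := WF x Wx.
have [b Eb] : exists b, a = b * pi ^+ k.
  case: (eqVneq a 0) => [->|an0]; first by exists 0; rewrite mul0r.
  have [v [m [Uv Ea]]] := dvr a an0.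
  have Pm : I (pi ^+ m).
    exists (v^-1 *: y); split; first by case: (lspan_sub F) => _ _; apply.
    have -> : pi ^+ m = v^-1 * a by rewrite Ea mulrA mulVr // mul1r.
    by rewrite -scalerA -scalerDr -Hx; apply: WZ.
  have km := kmin m Pm.
  by exists (v * pi ^+ (m - k)); rewrite Ea -mulrA -exprD subnK.
exists b, (x - b *: (pi ^+ k *: f + wk)); split; last by rewrite addrC subrK.
apply: G0sp; split.
  by apply: sub_sub => //; apply: WZ.
have -> : x - b *: (pi ^+ k *: f + wk) = y - b *: wk.
  by rewrite Hx Eb scalerDr scalerA opprD addrA; congr (_ - _); rewrite addrAC subrr add0r.
by apply: sub_sub; [exact: lspan_sub | done | case: (lspan_sub F) => _ _; apply].
Qed.

Lemma divlem {V : idomainType} {M : lmodType V} (pi : V) :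
  (forall a : V, a != 0 -> exists (u : V) (n : nat), u \is a GRing.unit /\ a = u * pi ^+ n) ->
  pi != 0 ->
  (forall (a : V) (x : M), a *: x = 0 -> a = 0 \/ x = 0) ->
  forall (E : seq M) (j : nat) (T0 : M -> Prop), is_submodule T0 ->
  exists H, (forall h, h \in H -> T0 h) /\
    forall u, T0 u -> lspan E (pi ^+ j *: u) -> lspan H u.
Proof.
move=> dvr pi0 tf E j T0 [T00 T0D T0Z].
pose W x := lspan E x /\ exists u, T0 u /\ x = pi ^+ j *: u.
have [L0 LD LZ] := lspan_sub E.
have HW0 : W 0 by split; [exact: L0 | exists 0; split; rewrite ?scaler0].
have HWD : forall x y, W x -> W y -> W (x + y).
  move=> x y [Lx [u [Tu Ex]]] [Ly [v [Tv Ey]]]; split; first exact: LD Lx Ly.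
  by exists (u + v); split; [exact: T0D | rewrite scalerDr Ex Ey].
have HWZ : forall (a : V) x, W x -> W (a *: x).
  move=> a x [Lx [u [Tu Ex]]]; split; first exact: LZ a x Lx.
  by exists (a *: u); split; [exact: T0Z | rewrite Ex !scalerA mulrC].
have HW : is_submodule W by split.
have [G [GW Gsp]] := noeth dvr HW (fun x (Hx : W x) => proj1 Hx).
have main : forall G' : seq M, (forall g, g \in G' -> W g) ->
    exists H, (forall h, h \in H -> T0 h) /\
      forall x, lspan G' x -> exists v, lspan H v /\ x = pi ^+ j *: v.
  elim => [|g G' IH] HG.
    by exists [::]; split => // x /= ->; exists 0; rewrite scaler0.
  have [_ [ug [Tug Eg]]] := HG g (mem_head _ _).
  have [H [HT Hsp]] := IH (fun g' Hg' => HG g' (ltac:(by rewrite in_cons Hg' orbT))).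
  exists (ug :: H); split.
    by move=> h; rewrite in_cons => /orP [/eqP ->|/HT].
  move=> x /= [a [y [Hy ->]]]; have [v [Hv ->]] := Hsp y Hy.
  exists (a *: ug + v); split; first by exists a, v.
  by rewrite scalerDr Eg !scalerA mulrC.
have [H [HT Hsp]] := main G GW.
exists H; split => // u Tu Lu.
have Wu : W (pi ^+ j *: u) by split => //; exists u.
have [v [Hv Ev]] := Hsp _ (Gsp _ Wu).
have : pi ^+ j *: (u - v) = 0 by rewrite scalerDr scalerN Ev subrr.
case/tf => [/eqP|/eqP]; first by rewrite expf_eq0 (negbTE pi0) andbF.
by rewrite subr_eq0 => /eqP ->.
Qed.

Lemma qsub {V : idomainType} {M : lmodType V} (H : seq M) (T0 : M -> Prop) (c : V) :
  is_submodule T0 ->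
  is_submodule (fun x => exists y z, lspan H y /\ T0 z /\ x = y + c *: z).
Proof.
move=> [T00 T0D T0Z]; have [L0 LD LZ] := lspan_sub H; split.
- by exists 0, 0; rewrite scaler0 addr0.
- move=> x1 x2 [y1 [z1 [L1 [T1 ->]]]] [y2 [z2 [L2 [T2 ->]]]].
  exists (y1 + y2), (z1 + z2); split; first exact: LD.
  split; first exact: T0D.
  by rewrite scalerDr -!addrA; congr (_ + _); rewrite addrCA.
- move=> a x [y [z [L1 [T1 ->]]]]; exists (a *: y), (a *: z).
  split; first exact: LZ. split; first exact: T0Z.
  by rewrite scalerDr !scalerA mulrC.
Qed.

Lemma qmono {V : idomainType} {M : lmodType V} (H H' : seq M) (T0 : M -> Prop) (c : V) x :
  {subset H <= H'} ->
  (exists y z, lspan H y /\ T0 z /\ x = y + c *: z) ->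
  (exists y z, lspan H' y /\ T0 z /\ x = y + c *: z).
Proof. move=> HH [y [z [Ly Rest]]]; exists y, z; split => //; exact: lspan_incl Ly. Qed.

Theorem proposition3p7 (V : idomainType) (pi : V) (M : lmodType V)
  (B : (M -> Prop) -> Prop) :
  complete_DVR pi -> bornological B -> torsionfree pi B ->
  nuclear pi (compactoid_born pi B).
Proof.
move=> [[pi0 _ dvr] _] _ [tf _] S [T0 [BT0 HT0 ST0 appr]].
have [T00 T0D T0Z] := HT0.
have [Fn HF] := @functional_choice _ _ _ appr.
have dec : forall n s, S s -> exists y z, lspan (Fn n) y /\ T0 z /\ s = y + pi ^+ n *: z.
  move=> n s Ss; have [_ H] := HF n; have [y [z [Hy Tz Es]]] := H s Ss.
  by exists y, z; split; [exact: span_of_lspan | split].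
pose R n z := T0 z /\ exists s y, S s /\ lspan (Fn (n + n)%N) y /\ s = y + pi ^+ (n + n) *: z.
pose Gen x := S x \/ exists n z, R n z /\ x = pi ^+ n *: z.
pose T x := forall U : M -> Prop, is_submodule U -> (forall y, Gen y -> U y) -> U x.
have HT : is_submodule T.
  split.
  - by move=> U [U0 _ _] _.
  - move=> x y Tx Ty U HU HG; have [_ UD _] := HU; apply: UD; [exact: Tx | exact: Ty].
  - move=> a x Tx U HU HG; have [_ _ UZ] := HU; apply: UZ; exact: Tx.
have GenT : forall x, Gen x -> T x by move=> x Gx U _ HU; apply: HU.
have Tmin : forall U, is_submodule U -> (forall y, Gen y -> U y) -> forall x, T x -> U x.
  by move=> U HU HG x Tx; apply: Tx.
have TT0 : forall x, T x -> T0 x.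
  apply: Tmin => // y [/ST0 //|[n [z [[Tz _] ->]]]]; exact: T0Z.
exists T; split => //.
- exists T0; split => // k.
  have claim : forall m, exists H, [/\ (forall h, h \in H -> T0 h),
      (forall s, S s -> exists y z, lspan H y /\ T0 z /\ s = y + pi ^+ k *: z) &
      (forall n z, (n < m)%N -> R n z ->
         exists y z', lspan H y /\ T0 z' /\ pi ^+ n *: z = y + pi ^+ k *: z')].
    elim => [|m [Hm [HmT HmS HmR]]].
      exists (Fn k); split => //; first by case: (HF k).
      exact: dec.
    have [K [KT Ksp]] := divlem dvr pi0 tf (Fn (m + m + k)%N ++ Fn (m + m)%N) (m + m)%N HT0.
    have sub1 : {subset Hm <= Hm ++ K} by move=> h Hh; rewrite mem_cat Hh.
    have sub2 : {subset K <= Hm ++ K} by move=> h Hh; rewrite mem_cat Hh orbT.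
    exists (Hm ++ K); split.
    + by move=> h; rewrite mem_cat => /orP [/HmT|/KT].
    + by move=> s Ss; apply: qmono sub1 _; apply: HmS.
    + move=> n z; rewrite ltnS leq_eqVlt => /orP [/eqP ->|Hn] Rz; last first.
        by apply: qmono sub1 _; apply: HmR.
      have [Tz [s [y [Ss [Ly Es]]]]] := Rz.
      have [y' [t [Ly' [Tt Es']]]] := dec (m + m + k)%N s Ss.
      pose u := z - pi ^+ k *: t.
      have Tu : T0 u by apply: sub_sub => //; exact: T0Z.
      have Lu : lspan (Fn (m + m + k)%N ++ Fn (m + m)%N) (pi ^+ (m + m) *: u).
        have -> : pi ^+ (m + m) *: u = y' - y.
          have E1 : pi ^+ (m + m) *: z = s - y by rewrite Es addrAC subrr add0r.
          rewrite /u scalerDr scalerN scalerA -exprD E1 Es'.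
          by rewrite addrAC addrK.
        apply: sub_sub; first exact: lspan_sub.
          by apply: lspan_incl Ly' => h Hh; rewrite mem_cat Hh.
        by apply: lspan_incl Ly => h Hh; rewrite mem_cat Hh orbT.
      have LKu := Ksp u Tu Lu.
      exists (pi ^+ m *: u), (pi ^+ m *: t); split.
        by case: (lspan_sub (Hm ++ K)) => _ _; apply; apply: lspan_incl LKu.
      split; first exact: T0Z.
      by rewrite scalerA mulrC -scalerA -scalerDr /u subrK.
  have [H [HT' HS HR]] := claim k.
  exists (undup H); split; first by move=> h; rewrite mem_undup; apply: HT'.
  move=> x Tx.
  have : exists y z, lspan H y /\ T0 z /\ x = y + pi ^+ k *: z.
    apply: (Tmin _ (qsub H (pi ^+ k) HT0)) Tx.
    move=> y [/HS //|[n [z [Rz ->]]]].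
    case: (ltnP n k) => [nk|kn]; first exact: HR.
    exists 0, (pi ^+ (n - k) *: z); split; first by case: (lspan_sub H).
    split; first by apply: T0Z; case: Rz.
    by rewrite add0r scalerA -exprD subnKC.
  move=> [y [z [Ly [Tz ->]]]]; exists y, z; split => //; exact: lspan_span_undup.
- move=> s Ss; apply: GenT; by left.
- move=> n.
  pose W x := T x /\ lspan (Fn (n + n)%N) x.
  have [L0 LD LZ] := lspan_sub (Fn (n + n)%N).
  have [HT0' HTD HTZ] := HT.
  have HW : is_submodule W.
    split; first by split.
    - by move=> x y [? ?] [? ?]; split; [apply: HTD | apply: LD].
    - by move=> a x [? ?]; split; [apply: HTZ | apply: LZ].
  have [G [GW Gsp]] := noeth dvr HW (fun x (Hx : W x) => proj2 Hx).
  exists (undup G); split.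
    by move=> g; rewrite mem_undup => /GW [].
  move=> s Ss; have [y [z [Ly [Tz Es]]]] := dec (n + n)%N s Ss.
  have Tw : T (pi ^+ n *: z).
    apply: GenT; right; exists n, z; split => //; split => //.
    by exists s, y.
  have Ew : s = y + pi ^+ n *: (pi ^+ n *: z) by rewrite scalerA -exprD.
  exists y, (pi ^+ n *: z); split => //.
  apply: lspan_span_undup; apply: Gsp; split => //.
  have -> : y = s - pi ^+ n *: (pi ^+ n *: z) by rewrite Ew addrK.
  apply: (@sub_sub _ _ T) => //; first by apply: GenT; left.
  exact: HTZ.
Qed.
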